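(* Let $\mathbf{C}$ be a finitary adhesive category with a strict initial object $\varnothing$, in which all final pullback complements (FPCs) along monomorphisms exist and monomorphisms are stable under FPCs. Let $\{p_j=(O_j\xleftarrow{}K_j\xrightarrow{}I_j)\}_{j\in\mathcal{J}}$ be a finite family of linear rules and $\{\kappa_j\}_{j\in\mathcal{J}}$ non-zero parameters $\kappa_j\in\mathbb{R}_{\geq 0}$ (base rates). For an object $M$ put $\mathbb{O}^{sq}_M:=\rho^{sq}_{\mathbf{C}}(\delta(M\xleftarrow{id_M}M\xrightarrow{id_M}M))$, and define $$H:=\hat{H}+\bar{H},\qquad \hat{H}:=\sum_{j\in\mathcal{J}}\kappa_j\,\rho^{sq}_{\mathbf{C}}(\delta(p_j)),\qquad \bar{H}:=-\sum_{j\in\mathcal{J}}\kappa_j\,\mathbb{O}^{sq}_{I_j}.$$ Then: (1) $H$ is the infinitesimal generator (Hamiltonian) of a continuous-time Markov chain; namely, writing $H|X\rangle=\sum_Y h_{X,Y}|Y\rangle$ (a finite sum over isomorphism classes $Y$ of objects), one has $h_{X,X}\leq 0$, $h_{X,Y}\geq 0$ for $Y\not\cong X$, and $\sum_Y h_{X,Y}=0$ for every $X$ (equivalently $\langle|H=0$). (2) For every object $M$, $\mathbb{O}^{sq}_M$ is an observable, i.e. a diagonal operator: $\mathbb{O}^{sq}_M|X\rangle=\omega_M(X)|X\rangle$ with $\omega_M(X)\in\mathbb{R}$ for every object $X$ (in fact $\omega_M(X)$ is the number of monomorphisms $M\to X$). (3) (Jump-closure) For every linear rule $p=(O\xleftarrow{o}K\xrightarrow{i}I)\in\mathrm{Lin}(\mathbf{C})$,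 $$\langle|\,\rho^{sq}_{\mathbf{C}}(\delta(p))=\langle|\,\mathbb{O}^{sq}_I.$$
   Context: A category is adhesive if it has pushouts along monomorphisms, has pullbacks, and pushouts along monomorphisms are van Kampen squares; finitary if every object has finitely many subobjects; a strict initial object is an initial object $\varnothing$ such that every morphism $X\to\varnothing$ is an isomorphism. FPC: given $a:A\to B$, $c:B\to C$, a pair $(d:D\to C,b:A\to D)$ is an FPC of $(c,a)$ if $c\circ a=d\circ b$, the square is a pullback, and for all $x:E\to B$, $y:E\to F$, $z:F\to C$, $w:E\to A$ with $(E,x,y)$ a pullback of $(c,z)$ and $a\circ w=x$, there is a unique $w^*:F\to D$ with $d\circ w^*=z$, $w^*\circ y=b\circ w$. The assumption means: for composable monomorphisms $K\xrightarrow{i}I\xrightarrow{m}X$ an FPC of $(m,i)$ exists and consists of monomorphisms. $\mathrm{Lin}(\mathbf{C})$: isomorphism classes of spans of monomorphisms $p=(O\xleftarrow{o}K\xrightarrow{i}I)$. SqPO derivation: $\mathsf{M}_p(X)$ is the set of monomorphisms $m:I\to X$; for such $m$ let $(i':\overline{K}\to X,k:K\to\overline{K})$ be the FPC of $(m,i)$ and let $p_m(X)$ be the pushout of $O\xleftarrow{o}K\xrightarrow{k}\overline{K}$. $\mathcal{R}_{\mathbf{C}}$ is the free $\mathbb{R}$-vector space with basis $\{\delta(p)\mid p\in\mathrm{Lin}(\mathbf{C})\}$. $\hat{\mathbf{C}}$ is the free $\mathbb{R}$-vector space with basis vectors $|X\rangle$ indexed by isomorphism classes of objects. The canonical representation: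 $\rho^{sq}_{\mathbf{C}}(\delta(p))|X\rangle:=\sum_{m\in\mathsf{M}_p(X)}|p_m(X)\rangle$ ($=0$ if $\mathsf{M}_p(X)=\emptyset$), extended linearly. The projection $\langle|$ is the linear functional with $\langle|X\rangle=1$ for every basis vector $|X\rangle$; $\langle|A=\langle|B$ for operators $A,B$ means $\langle|A|X\rangle=\langle|B|X\rangle$ for all $X$.
   Formalization: The category 𝐂 is also assumed to have only finitely many monomorphisms A → X for all objects A and X, so every set $\mathsf{M}_p(X)$ is finite. The statement above fails without it. *)

(* Defs.v *)
From Stdlib Require Import Reals List ClassicalEpsilon.
Set Implicit Arguments.
Open Scope R_scope.

Record Category := {
  Obj :> Type;
  Hom : Obj -> Obj -> Type;
  idm : forall A : Obj, Hom A A;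
  comp : forall A B D : Obj, Hom B D -> Hom A B -> Hom A D;
  comp_idl : forall A B (f : Hom A B), comp (idm B) f = f;
  comp_idr : forall A B (f : Hom A B), comp f (idm A) = f;
  comp_assoc : forall A B D E (h : Hom D E) (g : Hom B D) (f : Hom A B),
      comp h (comp g f) = comp (comp h g) f
}.
Arguments Hom {c} _ _.
Arguments idm {c} _.
Arguments comp {c A B D} _ _.

Section CatDefs.
Context (C : Category).
Local Notation "g ∘ f" := (comp g f) (at level 40, left associativity).

Definition mono {A B : C} (f : Hom A B) : Prop :=
  forall (Z : C) (g h : Hom Z A), f ∘ g = f ∘ h -> g = h.

Definition is_iso {A B : C} (f : Hom A B) : Prop :=
  exists g : Hom B A, g ∘ f = idm A /\ f ∘ g = idm B.

Definition isomorphic (A B : C) : Prop := exists f : Hom A B, is_iso f.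

Definition is_pullback {B D E : C} (f : Hom B E) (g : Hom D E)
    (P : C) (p1 : Hom P B) (p2 : Hom P D) : Prop :=
  f ∘ p1 = g ∘ p2 /\
  forall (Q : C) (q1 : Hom Q B) (q2 : Hom Q D), f ∘ q1 = g ∘ q2 ->
    exists! u : Hom Q P, p1 ∘ u = q1 /\ p2 ∘ u = q2.

Definition is_pushout {A B D : C} (f : Hom A B) (g : Hom A D)
    (P : C) (i1 : Hom B P) (i2 : Hom D P) : Prop :=
  i1 ∘ f = i2 ∘ g /\
  forall (Q : C) (q1 : Hom B Q) (q2 : Hom D Q), q1 ∘ f = q2 ∘ g ->
    exists! u : Hom P Q, u ∘ i1 = q1 /\ u ∘ i2 = q2.

Definition has_pullbacks : Prop :=
  forall (B D E : C) (f : Hom B E) (g : Hom D E),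
    exists (P : C) (p1 : Hom P B) (p2 : Hom P D), is_pullback f g P p1 p2.

Definition has_pushouts_along_monos : Prop :=
  forall (A B D : C) (f : Hom A B) (g : Hom A D), mono f ->
    exists (P : C) (i1 : Hom B P) (i2 : Hom D P), is_pushout f g P i1 i2.

Definition van_Kampen {A B D E : C} (f : Hom A B) (g : Hom A D)
    (h : Hom B E) (k : Hom D E) : Prop :=
  forall (A' B' D' E' : C) (f' : Hom A' B') (g' : Hom A' D')
         (h' : Hom B' E') (k' : Hom D' E')
         (a : Hom A' A) (b : Hom B' B) (d : Hom D' D) (e : Hom E' E),
    h' ∘ f' = k' ∘ g' ->
    f ∘ a = b ∘ f' -> g ∘ a = d ∘ g' -> h ∘ b = e ∘ h' -> k ∘ d = e ∘ k' ->
    is_pullback f b A' a f' -> is_pullback g d A' a g' ->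
    (is_pushout f' g' E' h' k' <->
       (is_pullback h e B' b h' /\ is_pullback k e D' d k')).

Definition adhesive : Prop :=
  has_pullbacks /\ has_pushouts_along_monos /\
  forall (A B D E : C) (f : Hom A B) (g : Hom A D) (h : Hom B E) (k : Hom D E),
    mono f -> is_pushout f g E h k -> van_Kampen f g h k.

Definition same_subobject {A A' X : C} (m : Hom A X) (m' : Hom A' X) : Prop :=
  exists phi : Hom A A', is_iso phi /\ m' ∘ phi = m.

Definition finitary : Prop :=
  forall X : C, exists l : list {A : C & Hom A X},
    (forall s, In s l -> mono (projT2 s)) /\
    forall (A : C) (m : Hom A X), mono m ->
      exists s, In s l /\ same_subobject m (projT2 s).

Definition is_initial (Z : C) : Prop := forall X : C, exists! f : Hom Z X, True.

Definition strict_initial (Z : C) : Prop :=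
  is_initial Z /\ forall (X : C) (f : Hom X Z), is_iso f.

Definition is_FPC {A B E : C} (c : Hom B E) (a : Hom A B)
    {D : C} (d : Hom D E) (b : Hom A D) : Prop :=
  c ∘ a = d ∘ b /\ is_pullback c d A a b /\
  forall (Eo F : C) (x : Hom Eo B) (y : Hom Eo F) (z : Hom F E) (w : Hom Eo A),
    is_pullback c z Eo x y -> a ∘ w = x ->
    exists! ws : Hom F D, d ∘ ws = z /\ ws ∘ y = b ∘ w.

Definition FPC_mono_assumption : Prop :=
  forall (K I X : C) (i : Hom K I) (m : Hom I X), mono i -> mono m ->
    exists (D : C) (d : Hom D X) (b : Hom K D), is_FPC m i d b /\ mono d /\ mono b.

(** Finiteness of the sets of monomorphisms A -> X (presupposed by the
    definition of the canonical representation). *)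
Definition mono_hom_finite : Prop :=
  forall A X : C, exists l : list (Hom A X), forall m : Hom A X, mono m -> In m l.

Lemma idm_mono (A : C) : mono (idm A).
Proof. intros Z g h H. rewrite !comp_idl in H. exact H. Qed.

Record rule := {
  rO : C; rK : C; rI : C;
  ro : Hom rK rO; ri : Hom rK rI;
  ro_mono : mono ro; ri_mono : mono ri
}.

Definition id_rule (M : C) : rule :=
  {| rO := M; rK := M; rI := M; ro := idm M; ri := idm M;
     ro_mono := idm_mono M; ri_mono := idm_mono M |}.

(** Y is (isomorphic to) the SqPO derivation p_m(X): FPC (i', k) of (m, i),
    then pushout of O <-o- K -k-> Kbar. *)
Definition sqpo_result (p : rule) (X : C) (m : Hom (rI p) X) (Y : C) : Prop :=
  exists (Kb : C) (i' : Hom Kb X) (k : Hom (rK p) Kb),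
    is_FPC m (ri p) i' k /\
    exists (P : C) (j1 : Hom (rO p) P) (j2 : Hom Kb P),
      is_pushout (ro p) k P j1 j2 /\ isomorphic P Y.

Definition has_card {T : Type} (P : T -> Prop) (n : nat) : Prop :=
  exists l : list T, NoDup l /\ (forall x, P x <-> In x l) /\ length l = n.

Definition card {T : Type} (P : T -> Prop) : nat :=
  epsilon (inhabits 0%nat) (fun n => has_card P n).

(** A vector is given by its coefficient function
    Y |-> (coefficient of the basis vector |[Y]>); all vectors below are
    isomorphism-invariant in Y.  Operators are given by their action on the
    basis vectors |X>. *)
Definition vec := C -> R.

Definition rho_sq (p : rule) (X : C) : vec :=
  fun Y => INR (card (fun m : Hom (rI p) X => mono m /\ sqpo_result p X m Y)).

Definition obs (M : C) (X : C) : vec := rho_sq (id_rule M) X.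

Fixpoint pw_noniso (l : list C) : Prop :=
  match l with
  | nil => True
  | Y :: l' => (forall Y', In Y' l' -> ~ isomorphic Y Y') /\ pw_noniso l'
  end.

Definition support_in (Ys : list C) (v : vec) : Prop :=
  pw_noniso Ys /\ forall Y : C, v Y <> 0 -> exists Y', In Y' Ys /\ isomorphic Y Y'.

Definition bra_value (v : vec) (s : R) : Prop :=
  exists Ys, support_in Ys v /\ s = fold_right Rplus 0 (map v Ys).

(** The projection < | applied to a vector: sum of all its coefficients. *)
Definition bra (v : vec) : R := epsilon (inhabits 0) (bra_value v).

Definition sumR (n : nat) (f : nat -> R) : R := fold_right Rplus 0 (map f (seq 0 n)).

Definition hamiltonian (n : nat) (p : nat -> rule) (kappa : nat -> R) (X : C) : vec :=
  fun Y => sumR n (fun j => kappa j * rho_sq (p j) X Y)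
         - sumR n (fun j => kappa j * obs (rI (p j)) X Y).

End CatDefs.

Arguments mono {C A B} f.
Arguments is_iso {C A B} f.
Arguments isomorphic {C} A B.
Arguments strict_initial {C} Z.
Arguments support_in {C} Ys v.
Arguments bra {C} v.
Arguments rho_sq {C} p X _.
Arguments obs {C} M X _.
Arguments hamiltonian {C} n p kappa X _.
Arguments rI {C} r.

(* Main.v *)
Require Import Defs.
From Stdlib Require Import Reals List Lra Lia ClassicalEpsilon FunctionalExtensionality PropExtensionality Classical.
Open Scope R_scope.

Section S.
Context {C : Category}.
Local Notation "g ⊚ f" := (Defs.comp g f) (at level 40, left associativity).

Lemma iso_refl (A : C) : isomorphic A A.
Proof. exists (idm A). exists (idm A). rewrite comp_idl. auto. Qed.

Lemma iso_sym (A B : C) : isomorphic A B -> isomorphic B A.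
Proof. intros [f [g [H1 H2]]]. exists g. exists f. auto. Qed.

Lemma iso_trans (A B D : C) : isomorphic A B -> isomorphic B D -> isomorphic A D.
Proof.
  intros [f [g [H1 H2]]] [f' [g' [H1' H2']]].
  exists (f' ⊚ f). exists (g ⊚ g'). split.
  - rewrite <- comp_assoc, (comp_assoc _ _ _ _ _ g' f' f), H1', comp_idl; exact H1.
  - rewrite <- comp_assoc, (comp_assoc _ _ _ _ _ f g g'), H2, comp_idl; exact H2'.
Qed.

Lemma FPC_unique {A B E D D' : C} (c : Hom B E) (a : Hom A B) (d : Hom D E) (b : Hom A D)
  (d' : Hom D' E) (b' : Hom A D') :
  is_FPC C c a d b -> is_FPC C c a d' b' ->
  exists psi : Hom D D', is_iso psi /\ psi ⊚ b = b' /\ d' ⊚ psi = d.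
Proof.
  intros [E1 [P1 F1]] [E2 [P2 F2]].
  destruct (F1 A D' a b' d' (idm A) P2 (comp_idr _ _ _ a)) as [u [[Hu1 Hu2] Uu]].
  destruct (F2 A D a b d (idm A) P1 (comp_idr _ _ _ a)) as [v [[Hv1 Hv2] Uv]].
  rewrite comp_idr in Hu2, Hv2.
  exists v. split; [|split; auto].
  exists u. split.
  - destruct (F1 A D a b d (idm A) P1 (comp_idr _ _ _ a)) as [w [_ Uw]].
    transitivity w; [symmetry|]; apply Uw; split.
    + rewrite comp_assoc, Hu1; exact Hv1.
    + rewrite <- comp_assoc, Hv2, Hu2, comp_idr; reflexivity.
    + apply comp_idr.
    + rewrite comp_idl, comp_idr; reflexivity.
  - destruct (F2 A D' a b' d' (idm A) P2 (comp_idr _ _ _ a)) as [w [_ Uw]].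
    transitivity w; [symmetry|]; apply Uw; split.
    + rewrite comp_assoc, Hv1; exact Hu1.
    + rewrite <- comp_assoc, Hu2, Hv2, comp_idr; reflexivity.
    + apply comp_idr.
    + rewrite comp_idl, comp_idr; reflexivity.
Qed.

Lemma pushout_iso {K O Kb Kb' P P' : C} (o : Hom K O) (k : Hom K Kb) (psi : Hom Kb Kb')
  (j1 : Hom O P) (j2 : Hom Kb P) (j1' : Hom O P') (j2' : Hom Kb' P') :
  is_iso psi -> is_pushout C o k P j1 j2 -> is_pushout C o (psi ⊚ k) P' j1' j2' -> isomorphic P P'.
Proof.
  intros [phi [Hpp Hpp']] [E U] [E' U'].
  destruct (U P' j1' (j2' ⊚ psi)) as [u [[Hu1 Hu2] _]].
  { rewrite E', comp_assoc; reflexivity. }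
  destruct (U' P j1 (j2 ⊚ phi)) as [v [[Hv1 Hv2] _]].
  { rewrite E, <- comp_assoc, (comp_assoc _ _ _ _ _ phi psi k), Hpp, comp_idl; reflexivity. }
  exists u. exists v. split.
  - destruct (U P j1 j2 E) as [w [_ Uw]].
    transitivity w; [symmetry|]; apply Uw; split.
    + rewrite <- comp_assoc, Hu1; exact Hv1.
    + rewrite <- comp_assoc, Hu2, comp_assoc, Hv2, <- comp_assoc, Hpp, comp_idr; reflexivity.
    + apply comp_idl.
    + apply comp_idl.
  - destruct (U' P' j1' j2' E') as [w [_ Uw]].
    transitivity w; [symmetry|]; apply Uw; split.
    + rewrite <- comp_assoc, Hv1; exact Hu1.
    + rewrite <- comp_assoc, Hv2, comp_assoc, Hu2, <- comp_assoc, Hpp', comp_idr; reflexivity.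
    + apply comp_idl.
    + apply comp_idl.
Qed.

Lemma sqpo_unique (q : rule C) X (m : Hom (rI q) X) Y Y' :
  sqpo_result q X m Y -> sqpo_result q X m Y' -> isomorphic Y Y'.
Proof.
  intros [Kb [i' [k [F [P [j1 [j2 [PO IY]]]]]]]] [Kb' [i'' [k' [F' [P' [j1' [j2' [PO' IY']]]]]]]].
  destruct (FPC_unique _ _ _ _ _ _ F F') as [psi [Hpsi [E1 E2]]].
  rewrite <- E1 in PO'.
  apply iso_trans with P. apply iso_sym; auto. apply iso_trans with P'; auto.
  eapply pushout_iso; eauto.
Qed.

Lemma sqpo_iso (q : rule C) X (m : Hom (rI q) X) Y Y' :
  sqpo_result q X m Y -> isomorphic Y Y' -> sqpo_result q X m Y'.
Proof.
  intros [Kb [i' [k [F [P [j1 [j2 [PO IY]]]]]]]] H.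
  exists Kb, i', k. split; auto. exists P, j1, j2. split; auto. eapply iso_trans; eauto.
Qed.

Lemma sqpo_exists (Hadh : adhesive C) (Hfpc : FPC_mono_assumption C) (q : rule C) X
  (m : Hom (rI q) X) : mono m -> exists Y, sqpo_result q X m Y.
Proof.
  intros Hm. destruct (Hfpc _ _ _ (ri q) m (ri_mono q) Hm) as [D [d [b [HF _]]]].
  destruct Hadh as [_ [Hpo _]].
  destruct (Hpo _ _ _ (ro q) b (ro_mono q)) as [P [j1 [j2 HP]]].
  exists P, D, d, b. split; auto. exists P, j1, j2. split; auto. apply iso_refl.
Qed.

Lemma sqpo_id (M X : C) (m : Hom M X) : sqpo_result (id_rule C M) X m X.
Proof.
  exists X, (idm X), m. split.
  - split; [simpl; rewrite comp_idr, comp_idl; reflexivity|]. split.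
    + split; [simpl; rewrite comp_idr, comp_idl; reflexivity|].
      intros Q q1 q2 Hq. exists q1. split.
      * split; [apply comp_idl|]. simpl in Hq. rewrite comp_idl in Hq. exact Hq.
      * intros u [Hu _]. simpl in Hu. rewrite comp_idl in Hu. auto.
    + intros Eo F x y z w Hpb Hw. exists z. split.
      * split; [apply comp_idl|]. destruct Hpb as [Hc _]. simpl in *.
        rewrite comp_idl in Hw. subst. auto.
      * intros u [Hu _]. rewrite comp_idl in Hu. auto.
  - exists X, m, (idm X). split; [|apply iso_refl]. split.
    + simpl. rewrite comp_idr, comp_idl. reflexivity.
    + intros Q q1 q2 Hq. exists q2. simpl in Hq. rewrite comp_idr in Hq. split.
      * split; auto. apply comp_idr.
      * intros u [_ Hu]. rewrite comp_idr in Hu. auto.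
Qed.
End S.

Definition dec (P : Prop) : bool := if excluded_middle_informative P then true else false.
Lemma dec_true (P : Prop) : dec P = true <-> P.
Proof. unfold dec; destruct (excluded_middle_informative P); split; intros; auto; discriminate. Qed.
Lemma dec_false (P : Prop) : negb (dec P) = true <-> ~ P.
Proof. unfold dec; destruct (excluded_middle_informative P); split; intros; simpl in *; auto; try discriminate; tauto. Qed.

Definition fin {T} (P : T -> Prop) := exists l : list T, forall x, P x -> In x l.

Lemma card_ext {T} (P Q : T -> Prop) : (forall x, P x <-> Q x) -> card P = card Q.
Proof.
  intros H. replace Q with P; auto. apply functional_extensionality; intros x.
  apply propositional_extensionality; auto.
Qed.

Lemma has_card_unique {T} (P : T -> Prop) n1 n2 : has_card P n1 -> has_card P n2 -> n1 = n2.
Proof.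
  intros [l1 [N1 [H1 L1]]] [l2 [N2 [H2 L2]]]. subst.
  apply Nat.le_antisymm; apply NoDup_incl_length; auto; intros x Hx.
  - apply H2, H1, Hx.
  - apply H1, H2, Hx.
Qed.

Lemma card_spec {T} (P : T -> Prop) n : has_card P n -> card P = n.
Proof.
  intros H. pose proof (epsilon_spec (inhabits 0%nat) (has_card P) (ex_intro _ n H)) as H'.
  eapply has_card_unique; eauto.
Qed.

Lemma card_empty {T} (P : T -> Prop) : (forall x, ~ P x) -> card P = 0%nat.
Proof.
  intros H. apply card_spec. exists nil. split; [constructor|]. split; auto.
  intros x; split; [intros Hx; destruct (H x Hx)| intros []].
Qed.

Lemma fin_has_card {T} (P : T -> Prop) : fin P -> has_card P (card P).
Proof.
  intros [l Hl].
  set (eqd := fun x y : T => excluded_middle_informative (x = y)).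
  assert (Hc : has_card P (length (filter (fun x => dec (P x)) (nodup eqd l)))).
  { eexists; split; [apply NoDup_filter, NoDup_nodup|]. split; auto.
    intros x. rewrite filter_In, nodup_In, dec_true. split; [intros Hx; split; auto|tauto]. }
  rewrite (card_spec _ _ Hc). exact Hc.
Qed.

Lemma card_split {T} (P Q : T -> Prop) : fin P ->
  card P = (card (fun x => P x /\ Q x) + card (fun x => P x /\ ~ Q x))%nat.
Proof.
  intros Hf. destruct (fin_has_card P Hf) as [l [N [H L]]].
  rewrite <- L, <- (filter_length (fun x => dec (Q x)) l).
  f_equal; symmetry; apply card_spec.
  - exists (filter (fun x => dec (Q x)) l). split; [apply NoDup_filter; auto|split; [|reflexivity]].
    intros x; rewrite filter_In, dec_true, H. tauto.
  - exists (filter (fun x => negb (dec (Q x))) l). split; [apply NoDup_filter; auto|split; [|reflexivity]].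
    intros x; rewrite filter_In, dec_false, H. tauto.
Qed.

Lemma card_mono {T} (P Q : T -> Prop) : fin P -> (forall x, Q x -> P x) -> (card Q <= card P)%nat.
Proof.
  intros Hf HQ. rewrite (card_split P Q Hf).
  rewrite (card_ext (fun x => P x /\ Q x) Q); [lia|]. intros x; split; [tauto|]. intros; split; auto.
Qed.

Lemma card_nonzero {T} (P : T -> Prop) : card P <> 0%nat -> exists x, P x.
Proof.
  intros H. apply NNPP; intros Hn. apply H, card_empty. intros x Hx; apply Hn; eauto.
Qed.

Section S2.
Context {C : Category}.

Definition inv (v : vec C) := forall Y Y', isomorphic Y Y' -> v Y = v Y'.
Definition sumL (v : vec C) (l : list C) := fold_right Rplus 0 (map v l).
Lemma sumL_cons v a l : sumL v (a :: l) = v a + sumL v l.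
Proof. reflexivity. Qed.

Lemma sumL_ext v w l : (forall Z, In Z l -> v Z = w Z) -> sumL v l = sumL w l.
Proof. intros H; unfold sumL; f_equal; apply map_ext_in; auto. Qed.

Lemma sumL_zero v l : (forall Z, In Z l -> v Z = 0) -> sumL v l = 0.
Proof.
  induction l as [|a l IH]; intros H; [reflexivity|]. rewrite sumL_cons, H, IH. lra. all: simpl; auto. intros Z HZ; apply H; simpl; auto.
Qed.

Definition vrem (v : vec C) (Y : C) : vec C :=
  fun Z => if excluded_middle_informative (isomorphic Z Y) then 0 else v Z.

Lemma vrem_inv v Y : inv v -> inv (vrem v Y).
Proof.
  intros Hv Z Z' HZ. unfold vrem.
  destruct (excluded_middle_informative (isomorphic Z Y)) as [h1|h1];
  destruct (excluded_middle_informative (isomorphic Z' Y)) as [h2|h2]; auto.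
  - exfalso; apply h2; eapply iso_trans; [apply iso_sym|]; eauto.
  - exfalso; apply h1; eapply iso_trans; eauto.
Qed.

Lemma sum_noiso v Y l : (forall Z, In Z l -> ~ isomorphic Z Y) -> sumL v l = sumL (vrem v Y) l.
Proof.
  intros H; apply sumL_ext; intros Z HZ; unfold vrem.
  destruct (excluded_middle_informative (isomorphic Z Y)); auto. exfalso; eapply H; eauto.
Qed.

Lemma sum_remove (v : vec C) (Hv : inv v) (Y : C) (L : list C) :
  pw_noniso C L -> (exists Y', In Y' L /\ isomorphic Y' Y) ->
  sumL v L = sumL (vrem v Y) L + v Y.
Proof.
  induction L as [|a L IH]; intros HL [Y' [HI HY]]; [destruct HI|].
  destruct HL as [Ha HL]. rewrite !sumL_cons.
  unfold vrem at 1.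
  destruct (excluded_middle_informative (isomorphic a Y)) as [Hay|Hay].
  - rewrite (sum_noiso v Y L), (Hv a Y Hay); [lra|].
    intros Z HZ HZY. apply (Ha Z HZ). eapply iso_trans; [exact Hay| apply iso_sym; auto].
  - destruct HI as [<-|HI]; [contradiction|].
    rewrite IH; eauto. lra.
Qed.

Lemma sum_support_unique (Ys : list C) : pw_noniso C Ys -> forall (v : vec C) Ys', inv v -> pw_noniso C Ys' ->
  (forall Y, v Y <> 0 -> exists Y', In Y' Ys /\ isomorphic Y Y') ->
  (forall Y, v Y <> 0 -> exists Y', In Y' Ys' /\ isomorphic Y Y') ->
  sumL v Ys = sumL v Ys'.
Proof.
  induction Ys as [|Y Ys IH]; intros HP v Ys' Hv HP' C1 C2.
  - symmetry; apply sumL_zero. intros Z _. apply NNPP; intros HZ.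
    destruct (C1 Z HZ) as [? [[] _]].
  - destruct HP as [HY HP]. rewrite sumL_cons.
    destruct (Req_dec (v Y) 0) as [H0|H0].
    + rewrite H0, Rplus_0_l. apply IH; auto.
      intros Z HZ. destruct (C1 Z HZ) as [Y' [[<-|HI] HZY]]; eauto.
      exfalso; apply HZ; rewrite (Hv Z Y HZY); auto.
    + destruct (C2 Y H0) as [Y1 [HY1 HYY1]].
      rewrite (sum_remove v Hv Y Ys' HP' (ex_intro _ Y1 (conj HY1 (iso_sym _ _ HYY1)))).
      rewrite (sum_noiso v Y Ys).
      2:{ intros Z HZ HZY. apply (HY Z HZ), iso_sym; auto. }
      rewrite (IH HP (vrem v Y) Ys' (vrem_inv v Y Hv) HP'); [lra| |].
      * intros Z HZ. unfold vrem in HZ.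
        destruct (excluded_middle_informative (isomorphic Z Y)) as [h|h]; [lra|].
        destruct (C1 Z HZ) as [Y' [[<-|HI] HZY]]; [contradiction|eauto].
      * intros Z HZ. unfold vrem in HZ.
        destruct (excluded_middle_informative (isomorphic Z Y)) as [h|h]; [lra|]. auto.
Qed.

Lemma bra_eq (v : vec C) Ys : inv v -> support_in Ys v -> bra v = sumL v Ys.
Proof.
  intros Hv HS. unfold bra.
  destruct (epsilon_spec (inhabits 0) (bra_value v) (ex_intro _ (sumL v Ys) (ex_intro _ Ys (conj HS eq_refl))))
    as [Ys' [HS' E]].
  rewrite E. destruct HS as [P1 C1]; destruct HS' as [P2 C2].
  apply (sum_support_unique Ys' P2 v Ys Hv P1 C2 C1).
Qed.

Lemma dedup (l : list C) : exists Ys, pw_noniso C Ys /\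
  forall Y, In Y l -> exists Y', In Y' Ys /\ isomorphic Y Y'.
Proof.
  induction l as [|a l [Ys [HP HC]]].
  - exists nil. split. exact I. intros Y [].
  - destruct (classic (exists Y', In Y' Ys /\ isomorphic a Y')) as [[Y' HY']|Hn].
    + exists Ys. split; auto. intros Y [<-|HY]; eauto.
    + exists (a :: Ys). split. split; auto. intros Y' HY' Hi. apply Hn; eauto.
      intros Y [<-|HY]. exists a; split; [left; auto | apply iso_refl].
      destruct (HC Y HY) as [Y' [? ?]]. exists Y'; split; [right|]; auto.
Qed.

Lemma count_classes {T} (R : T -> C -> Prop) (Ys : list C) : pw_noniso C Ys ->
  (forall m Y Y', R m Y -> R m Y' -> isomorphic Y Y') ->
  forall (Q : T -> Prop), fin Q ->
  (forall m, Q m -> exists Y, In Y Ys /\ R m Y) ->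
  sumL (fun Y => INR (card (fun m => Q m /\ R m Y))) Ys = INR (card Q).
Proof.
  intros HP HR. induction Ys as [|Y Ys IH]; intros Q Hf HQ.
  - rewrite card_empty; [reflexivity|]. intros m Hm. destruct (HQ m Hm) as [? [[] _]].
  - destruct HP as [HY HP]. rewrite sumL_cons.
    rewrite (card_split Q (fun m => R m Y) Hf), plus_INR.
    rewrite <- (IH HP (fun m => Q m /\ ~ R m Y)).
    + f_equal. apply sumL_ext. intros Z HZ. f_equal. apply card_ext. intros m; split.
      * intros [Hq Hr]. split; auto. split; auto. intros HmY. apply (HY Z HZ). eauto.
      * tauto.
    + destruct Hf as [l Hl]. exists l. intros x [Hx _]; auto.
    + intros m [Hm Hn]. destruct (HQ m Hm) as [Y' [[<-|HI] HR']]; [contradiction|eauto].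
Qed.
End S2.

Section S3.
Context {C : Category}.

Lemma rho_inv (q : rule C) X : inv (rho_sq q X).
Proof.
  intros Y Y' H. unfold rho_sq. f_equal. apply card_ext. intros m; split; intros [Hm Hs]; split; auto;
  eapply sqpo_iso; eauto. apply iso_sym; auto.
Qed.

Lemma obs_diag (M X : C) : obs M X X = INR (card (fun f : Hom M X => mono f)).
Proof.
  unfold obs, rho_sq. f_equal. apply card_ext. intros m; split; [tauto|].
  intros Hm; split; auto. apply sqpo_id.
Qed.

Lemma obs_off (M X Y : C) : ~ isomorphic X Y -> obs M X Y = 0.
Proof.
  intros HXY. unfold obs, rho_sq. rewrite card_empty; [reflexivity|].
  intros m [Hm Hs]. apply HXY. exact (sqpo_unique _ _ _ _ _ (sqpo_id M X m) Hs).
Qed.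

Lemma obs_support (M X : C) : support_in (X :: nil) (obs M X).
Proof.
  split. split; [intros _ []|exact I].
  intros Y HY. exists X. split; [left; auto|]. apply iso_sym, NNPP. intros H. apply HY, obs_off, H.
Qed.

Lemma bra_obs (M X : C) : bra (obs M X) = INR (card (fun f : Hom M X => mono f)).
Proof.
  rewrite (bra_eq (obs M X) _ (rho_inv _ _) (obs_support M X)). rewrite sumL_cons, obs_diag.
  unfold sumL; simpl. lra.
Qed.

Lemma list_choice (Hadh : adhesive C) (Hfpc : FPC_mono_assumption C) (q : rule C) X
  (l : list (Hom (rI q) X)) :
  exists lo : list C, forall m, In m l -> mono m -> exists Y, In Y lo /\ sqpo_result q X m Y.
Proof.
  induction l as [|a l [lo Hlo]].
  - exists nil. intros m [].
  - destruct (classic (mono a)) as [Ha|Ha].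
    + destruct (sqpo_exists Hadh Hfpc q X a Ha) as [Ya HYa].
      exists (Ya :: lo). intros m [<-|Hm] Hmm.
      * exists Ya; split; [left|]; auto.
      * destruct (Hlo m Hm Hmm) as [Y [? ?]]. exists Y; split; [right|]; auto.
    + exists lo. intros m [<-|Hm] Hmm; [contradiction|]. auto.
Qed.

Lemma rho_support (Hadh : adhesive C) (Hfpc : FPC_mono_assumption C) (Hmf : mono_hom_finite C)
  (q : rule C) X :
  exists Ys, support_in Ys (rho_sq q X) /\
    sumL (rho_sq q X) Ys = INR (card (fun m : Hom (rI q) X => mono m)).
Proof.
  destruct (Hmf (rI q) X) as [l Hl].
  destruct (list_choice Hadh Hfpc q X l) as [lo Hlo].
  destruct (dedup lo) as [Ys [HP HC]].
  assert (Hcov : forall m : Hom (rI q) X, mono m -> exists Y, In Y Ys /\ sqpo_result q X m Y).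
  { intros m Hm. destruct (Hlo m (Hl m Hm) Hm) as [Y [HY HR]].
    destruct (HC Y HY) as [Y' [HY' HI]]. exists Y'; split; auto. eapply sqpo_iso; eauto. }
  exists Ys. split; [split; auto|].
  - intros Y HY. unfold rho_sq in HY.
    assert (Hc : card (fun m : Hom (rI q) X => mono m /\ sqpo_result q X m Y) <> 0%nat).
    { intros E; rewrite E in HY; apply HY; reflexivity. }
    destruct (card_nonzero _ Hc) as [m [Hm Hs]].
    destruct (Hcov m Hm) as [Y' [HY' Hs']]. exists Y'; split; auto. eapply sqpo_unique; eauto.
  - unfold rho_sq. apply (count_classes (fun m Y => sqpo_result q X m Y)); auto.
    + intros m Y Y'. apply sqpo_unique.
    + exists l; auto.
Qed.

Lemma jump_closure (Hadh : adhesive C) (Hfpc : FPC_mono_assumption C) (Hmf : mono_hom_finite C)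
  (q : rule C) X : bra (rho_sq q X) = bra (obs (rI q) X).
Proof.
  destruct (rho_support Hadh Hfpc Hmf q X) as [Ys [HS E]].
  rewrite (bra_eq _ _ (rho_inv _ _) HS), E, bra_obs. reflexivity.
Qed.
End S3.

Arguments sumL : simpl never.

Definition fsum (l : list nat) (f : nat -> R) := fold_right Rplus 0 (map f l).

Lemma fsum_le l f g : (forall j, In j l -> f j <= g j) -> fsum l f <= fsum l g.
Proof.
  induction l as [|a l IH]; intros H; unfold fsum; simpl; [lra|].
  apply Rplus_le_compat; [apply H; left; auto|apply IH; intros; apply H; right; auto].
Qed.

Lemma fsum_ext l f g : (forall j, In j l -> f j = g j) -> fsum l f = fsum l g.
Proof. intros H; unfold fsum; f_equal; apply map_ext_in; auto. Qed.

Lemma fsum_zero l : fsum l (fun _ => 0) = 0.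
Proof. induction l as [|a l IH]; unfold fsum in *; simpl; [|rewrite IH]; lra. Qed.

Lemma fsum_nz l f : fsum l f <> 0 -> exists j, In j l /\ f j <> 0.
Proof.
  intros H. apply NNPP; intros Hn. apply H. rewrite <- (fsum_zero l). apply fsum_ext.
  intros j Hj. apply NNPP; intros Hj'. apply Hn; eauto.
Qed.

Lemma sumR_fsum n f : sumR n f = fsum (seq 0 n) f.
Proof. reflexivity. Qed.

Lemma in_seq0 n j : In j (seq 0 n) <-> (j < n)%nat.
Proof. rewrite in_seq. lia. Qed.

Section S4.
Context {C : Category}.

Lemma fsum_cons_l (l : list nat) (k : nat -> R) (F : nat -> vec C) Y Ys :
  fsum l (fun j => k j * sumL (F j) (Y::Ys)) =
  fsum l (fun j => k j * F j Y) + fsum l (fun j => k j * sumL (F j) Ys).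
Proof.
  induction l as [|a l IH]; unfold fsum in *; simpl; [lra|]. rewrite IH, sumL_cons. lra.
Qed.

Lemma fsum_nil_l (l : list nat) (k : nat -> R) (F : nat -> vec C) :
  fsum l (fun j => k j * sumL (F j) nil) = 0.
Proof.
  induction l as [|a l IH]; unfold fsum in *; simpl; [lra|]. rewrite IH. unfold sumL; simpl. lra.
Qed.

Lemma sumL_ham n p kappa (X : C) Ys :
  sumL (hamiltonian n p kappa X) Ys =
  fsum (seq 0 n) (fun j => kappa j * sumL (rho_sq (p j) X) Ys) -
  fsum (seq 0 n) (fun j => kappa j * sumL (obs (rI (p j)) X) Ys).
Proof.
  induction Ys as [|Y Ys IH].
  - rewrite (fsum_nil_l _ _ (fun j => rho_sq (p j) X)), (fsum_nil_l _ _ (fun j => obs (rI (p j)) X)).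
    unfold sumL; simpl; lra.
  - rewrite sumL_cons, IH.
    rewrite (fsum_cons_l _ _ (fun j => rho_sq (p j) X)), (fsum_cons_l _ _ (fun j => obs (rI (p j)) X)).
    unfold hamiltonian. rewrite !sumR_fsum. lra.
Qed.

Lemma obs_inv (M X : C) : inv (obs M X).
Proof. exact (rho_inv _ _). Qed.

Lemma ham_inv n p kappa (X : C) : inv (hamiltonian n p kappa X).
Proof.
  intros Y Y' H. unfold hamiltonian. rewrite !sumR_fsum.
  rewrite (fsum_ext _ (fun j => kappa j * rho_sq (p j) X Y) (fun j => kappa j * rho_sq (p j) X Y')),
          (fsum_ext _ (fun j => kappa j * obs (rI (p j)) X Y) (fun j => kappa j * obs (rI (p j)) X Y'));
  auto; intros j _; f_equal; [apply obs_inv| apply rho_inv]; auto.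
Qed.

Lemma big_list (Hadh : adhesive C) (Hfpc : FPC_mono_assumption C) (Hmf : mono_hom_finite C)
  (p : nat -> rule C) (X : C) n :
  exists lo, In X lo /\ forall j, (j < n)%nat -> forall Y, rho_sq (p j) X Y <> 0 ->
     exists Y', In Y' lo /\ isomorphic Y Y'.
Proof.
  induction n as [|n [lo [HX Hlo]]].
  - exists (X :: nil). split; [left; auto|]. intros; lia.
  - destruct (rho_support Hadh Hfpc Hmf (p n) X) as [Ys [[_ HS] _]].
    exists (Ys ++ lo). split; [apply in_or_app; right; auto|].
    intros j Hj Y HY. destruct (Nat.eq_dec j n) as [->|Hne].
    + destruct (HS Y HY) as [Y' [? ?]]. exists Y'; split; auto. apply in_or_app; auto.
    + destruct (Hlo j ltac:(lia) Y HY) as [Y' [? ?]]. exists Y'; split; auto. apply in_or_app; auto.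
Qed.

Lemma part1 (Hadh : adhesive C) (Hfpc : FPC_mono_assumption C) (Hmf : mono_hom_finite C)
  n p kappa (Hk : forall j, (j < n)%nat -> 0 < kappa j) (X : C) :
     hamiltonian n p kappa X X <= 0 /\
     (forall Y : C, ~ isomorphic X Y -> 0 <= hamiltonian n p kappa X Y) /\
     (exists Ys, support_in Ys (hamiltonian n p kappa X)) /\
     bra (hamiltonian n p kappa X) = 0.
Proof.
  split; [|split; [|]].
  - unfold hamiltonian. rewrite !sumR_fsum.
    cut (fsum (seq 0 n) (fun j => kappa j * rho_sq (p j) X X) <=
         fsum (seq 0 n) (fun j => kappa j * obs (rI (p j)) X X)); [lra|].
    apply fsum_le. intros j Hj. apply in_seq0 in Hj.
    apply Rmult_le_compat_l; [apply Rlt_le; auto|].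
    rewrite obs_diag. unfold rho_sq. apply le_INR. apply card_mono.
    + destruct (Hmf (rI (p j)) X) as [l Hl]. exists l; auto.
    + tauto.
  - intros Y HXY. unfold hamiltonian. rewrite !sumR_fsum.
    rewrite (fsum_ext _ (fun j => kappa j * obs (rI (p j)) X Y) (fun _ => 0)), fsum_zero.
    2:{ intros j _. rewrite obs_off; auto. lra. }
    rewrite <- (fsum_zero (seq 0 n)) at 1. cut (fsum (seq 0 n) (fun _ => 0) <= fsum (seq 0 n) (fun j : nat => kappa j * rho_sq (p j) X Y)); [lra|].
    apply fsum_le. intros j Hj. apply in_seq0 in Hj.
    apply Rmult_le_pos; [apply Rlt_le; auto| apply pos_INR].
  - destruct (big_list Hadh Hfpc Hmf p X n) as [lo [HX Hlo]].
    destruct (dedup lo) as [Ys [HP HC]].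
    assert (HS : support_in Ys (hamiltonian n p kappa X)).
    { split; auto. intros Y HY.
      assert (Hy : exists Y0, In Y0 lo /\ isomorphic Y Y0).
      { unfold hamiltonian in HY. rewrite !sumR_fsum in HY.
        destruct (Req_dec (fsum (seq 0 n) (fun j => kappa j * rho_sq (p j) X Y)) 0) as [H0|H0].
        - rewrite H0 in HY. destruct (fsum_nz _ _ (fun E => HY ltac:(rewrite E; lra))) as [j [Hj Hj']].
          exists X; split; auto. apply iso_sym, NNPP. intros Hn. apply Hj'. rewrite obs_off; auto. lra.
        - destruct (fsum_nz _ _ H0) as [j [Hj Hj']]. apply in_seq0 in Hj.
          apply (Hlo j Hj). intros E; apply Hj'; rewrite E; lra. }
      destruct Hy as [Y0 [HY0 HI0]]. destruct (HC Y0 HY0) as [Y' [? ?]].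
      exists Y'; split; auto. eapply iso_trans; eauto. }
    split; [exists Ys; auto|].
    rewrite (bra_eq _ _ (ham_inv n p kappa X) HS), sumL_ham.
    cut (forall j, In j (seq 0 n) -> sumL (rho_sq (p j) X) Ys = sumL (obs (rI (p j)) X) Ys).
    { intros Hj. rewrite (fsum_ext _ (fun j => kappa j * sumL (rho_sq (p j) X) Ys)
                                     (fun j => kappa j * sumL (obs (rI (p j)) X) Ys)); [lra|].
      intros j Hjj. rewrite Hj; auto. }
    intros j Hj. apply in_seq0 in Hj.
    assert (S1 : support_in Ys (rho_sq (p j) X)).
    { split; auto. intros Y HY. destruct (Hlo j Hj Y HY) as [Y0 [HY0 HI0]].
      destruct (HC Y0 HY0) as [Y' [? ?]]. exists Y'; split; auto. eapply iso_trans; eauto. }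
    assert (S2 : support_in Ys (obs (rI (p j)) X)).
    { split; auto. intros Y HY. destruct (HC X HX) as [Y' [? ?]]. exists Y'; split; auto.
      eapply iso_trans; [|eauto]. apply iso_sym, NNPP. intros Hn. apply HY, obs_off, Hn. }
    rewrite <- (bra_eq _ _ (rho_inv _ _) S1), <- (bra_eq _ _ (obs_inv _ _) S2).
    apply jump_closure; auto.
Qed.
End S4.

Theorem mainTheorem5 (C : Category)
  (Hadh : adhesive C) (Hfin : finitary C)
  (Hinit : exists Z : C, strict_initial Z)
  (Hfpc : FPC_mono_assumption C)
  (Hmf : mono_hom_finite C)
  (n : nat) (p : nat -> rule C) (kappa : nat -> R)
  (Hk : forall j, (j < n)%nat -> 0 < kappa j) :
  (forall X : C,
     hamiltonian n p kappa X X <= 0 /\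
     (forall Y : C, ~ isomorphic X Y -> 0 <= hamiltonian n p kappa X Y) /\
     (exists Ys, support_in Ys (hamiltonian n p kappa X)) /\
     bra (hamiltonian n p kappa X) = 0) /\
  (forall M X : C,
     obs M X X = INR (card (fun f : Hom M X => mono f)) /\
     (forall Y : C, ~ isomorphic X Y -> obs M X Y = 0)) /\
  (forall (q : rule C) (X : C), bra (rho_sq q X) = bra (obs (rI q) X)).
Proof.
  split; [|split].
  - intros X. apply part1; auto.
  - intros M X. split; [apply obs_diag|]. intros Y H; apply obs_off; auto.
  - intros q X. apply jump_closure; auto.
Qed.
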